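(* Let $g\ge1$ be an integer and let $a,b$ be integers with $0<a<b$. Define $\gamma_1=a$, $\gamma_2=b$, and for $r\ge3$ let $\gamma_r$ be the smallest integer greater than $\gamma_{r-1}$ such that $\{\gamma_1,\dots,\gamma_r\}$ is a $\mathcal D[g]$ set. Then there is an integer $n_0=n_0(a,b,g)$ such that $\gamma_n=2\gamma_{n-1}$ for all $n\ge n_0$.
   Context: For a positive integer $g$, a set $\mathcal S=\{a_1<a_2<\cdots\}\subset\mathbb N$ is a $\mathcal D[g]$ set if for every $m$ (for which $a_m$ exists) and every $t\in\mathbb Z$, $$\left|\left\{I\subseteq\{1,\dots,m\}:\ \sum_{i\in I}a_i=t\right\}\right|\le g.$$ *)

(* Defs.v *)
From mathcomp Require Import all_boot.
Set Implicit Arguments. Unset Strict Implicit. Unset Printing Implicit Defensive.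

(* Number of index subsets I of {0..size s - 1} with sum_{i in I} s_i = t.
   (Sums of naturals are naturals, so negative targets t always give 0
    and it suffices to consider t : nat.) *)
Definition nreps (s : seq nat) (t : nat) : nat :=
  #|[set I : {set 'I_(size s)} | (\sum_(i in I) nth 0 s i) == t]|.

Definition DgSeq (g : nat) (s : seq nat) : Prop :=
  forall m t, m <= size s -> nreps (take m s) t <= g.

Definition gprefix (gam : nat -> nat) (r : nat) : seq nat :=
  [seq gam i | i <- iota 1 r].

(* Main.v *)
Require Import Defs.
From mathcomp Require Import all_boot zify.
From Stdlib Require Import Classical.

Definition cnt n (w : nat -> nat) t :=
  #|[set I : {set 'I_n} | (\sum_(i in I) w i) == t]|.

Section Bridge.
Variable n : nat.
Variable w : nat -> nat.

Let wd := widen_ord (leqnSn n).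
Definition fS (J : {set 'I_n}) : {set 'I_n.+1} := wd @: J.
Definition gS (J : {set 'I_n}) : {set 'I_n.+1} := ord_max |: fS J.
Definition res (I : {set 'I_n.+1}) : {set 'I_n} := [set j | wd j \in I].

Lemma wd_inj : injective wd.
Proof. by move=> i j /(congr1 val) /= /val_inj. Qed.

Lemma max_notin_fS J : ord_max \notin fS J.
Proof.
apply/imsetP => -[j _] /(congr1 val) /= E.
by move: (ltn_ord j); rewrite -E ltnn.
Qed.

Lemma res_fS J : res (fS J) = J.
Proof. by apply/setP => j; rewrite inE mem_imset //; apply: wd_inj. Qed.

Lemma res_gS J : res (gS J) = J.
Proof.
apply/setP => j; rewrite !inE mem_imset; last exact: wd_inj.
case: eqP => // /(congr1 val) /= E.
by move: (ltn_ord j); rewrite E ltnn.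
Qed.

Lemma fS_res (I : {set 'I_n.+1}) : ord_max \notin I -> fS (res I) = I.
Proof.
move=> HI; apply/setP => i.
case: (unliftP ord_max i) => [j ->|->]; last first.
  by rewrite (negPf HI) (negPf (max_notin_fS _)).
have -> : lift ord_max j = wd j by apply: val_inj; rewrite /= /bump leqNgt ltn_ord.
by rewrite mem_imset ?inE //; apply: wd_inj.
Qed.

Lemma gS_res (I : {set 'I_n.+1}) : ord_max \in I -> gS (res I) = I.
Proof.
move=> HI; apply/setP => i.
case: (unliftP ord_max i) => [j ->|->]; last by rewrite HI !inE eqxx.
have -> : lift ord_max j = wd j by apply: val_inj; rewrite /= /bump leqNgt ltn_ord.
rewrite !inE mem_imset ?inE; last exact: wd_inj.
case: eqP => // /(congr1 val) /= E.
by move: (ltn_ord j); rewrite E ltnn.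
Qed.

Lemma sum_fS J : \sum_(i in fS J) w i = \sum_(j in J) w j.
Proof. by rewrite big_imset //= => i j _ _; apply: wd_inj. Qed.

Lemma sum_gS J : \sum_(i in gS J) w i = w n + \sum_(j in J) w j.
Proof. by rewrite big_setU1 ?max_notin_fS //= sum_fS. Qed.

Lemma cntS t : cnt n.+1 w t = cnt n w t + (if w n <= t then cnt n w (t - w n) else 0).
Proof.
rewrite /cnt.
set A := [set I : {set 'I_n.+1} | _].
rewrite -(cardsID [set I : {set 'I_n.+1} | ord_max \in I] A) addnC.
congr (_ + _).
  have -> : A :\: [set I : {set 'I_n.+1} | ord_max \in I] = fS @: [set J : {set 'I_n} | \sum_(j in J) w j == t].
    apply/setP => I; rewrite !inE.
    apply/idP/imsetP.
      case/andP => H1 H2; exists (res I); last by rewrite fS_res.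
      by rewrite inE -sum_fS fS_res.
    case=> J; rewrite inE => HJ ->; rewrite max_notin_fS sum_fS //.
  by rewrite card_imset //; apply: (can_inj res_fS).
case: leqP => Hw.
  have -> : A :&: [set I : {set 'I_n.+1} | ord_max \in I] = gS @: [set J : {set 'I_n} | \sum_(j in J) w j == t - w n].
    apply/setP => I; rewrite !inE.
    apply/idP/imsetP.
      case/andP => H2 H1; exists (res I); last by rewrite gS_res.
      rewrite inE; move: H2; rewrite -(gS_res _ H1) sum_gS res_gS => /eqP <-.
      by rewrite addKn.
    case=> J; rewrite inE => /eqP HJ ->; rewrite sum_gS HJ subnKC // eqxx /=.
    by rewrite !inE eqxx.
  by rewrite card_imset //; apply: (can_inj res_gS).
apply/eqP; rewrite cards_eq0; apply/eqP/setP => I; rewrite !inE.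
apply/negP => /andP [/eqP H2 H1].
move: H2; rewrite -(gS_res _ H1) sum_gS => E.
by move: Hw; rewrite -E ltnNge leq_addr.
Qed.
End Bridge.

Lemma cnt0 w t : cnt 0 w t = (t == 0).
Proof.
rewrite /cnt.
have E : forall I : {set 'I_0}, I = set0 by move=> I; apply/setP => -[].
case: (t =P 0) => [->|Ht].
  rewrite (_ : [set _ | _] = [set set0]) ?cards1 //.
  by apply/setP => I; rewrite !inE (E I) big_set0 !eqxx.
rewrite (_ : [set _ | _] = set0) ?cards0 //.
apply/setP => I; rewrite !inE (E I) big_set0.
by case: eqP => // H; case: Ht.
Qed.

Lemma cnt_ext n w w' t : (forall i, i < n -> w i = w' i) -> cnt n w t = cnt n w' t.
Proof.
move=> H; rewrite /cnt; apply: eq_card => I; rewrite !inE.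
by rewrite (eq_bigr (fun i : 'I_n => w' i)) // => i _; apply: H.
Qed.

Lemma nreps_rcons s x t :
  nreps (rcons s x) t = nreps s t + (if x <= t then nreps s (t - x) else 0).
Proof.
change (cnt (size (rcons s x)) (nth 0 (rcons s x)) t =
  cnt (size s) (nth 0 s) t + (if x <= t then cnt (size s) (nth 0 s) (t - x) else 0)).
rewrite size_rcons cntS nth_rcons ltnn eqxx.
have H : forall i, i < size s -> nth 0 (rcons s x) i = nth 0 s i.
  by move=> i Hi; rewrite nth_rcons Hi.
by rewrite (cnt_ext _ _ _ t H) (cnt_ext _ _ _ (t - x) H).
Qed.

Lemma nreps_nil t : nreps [::] t = (t == 0).
Proof. exact: cnt0. Qed.

Set Implicit Arguments. Unset Strict Implicit.

Lemma ev_const (f : nat -> nat) N :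
  (forall n, N <= n -> f n.+1 <= f n) ->
  exists n2, N <= n2 /\ forall n, n2 <= n -> f n.+1 = f n.
Proof.
move=> Hf.
have Hle : forall N', N <= N' -> forall n, N' <= n -> f n <= f N'.
  move=> N' HN' n Hn; elim: n Hn => [|n IH] Hn.
    by move: Hn; rewrite leqn0 => /eqP ->.
  case: (ltngtP N' n.+1) Hn => // [Hlt _|-> _] //.
  apply: leq_trans (IH Hlt); apply: Hf; lia.
move: {2}(f N) (leqnn (f N)) => v.
elim: v N Hf Hle => [|v IH] N0 Hf Hle HN.
  exists N0; split => // n Hn.
  have h1 := Hle N0 (leqnn _) n Hn.
  have h2 := Hle N0 (leqnn _) n.+1 (leqW Hn).
  lia.
case: (classic (forall n, N0 <= n -> f n.+1 = f n)) => [H|H].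
  by exists N0.
case: (not_all_ex_not _ _ H) => n Hn.
have Hn0 : N0 <= n by apply: NNPP => Hc; apply: Hn => Hc'; case: Hc.
have Hne : f n.+1 <> f n by move=> E; apply: Hn.
have h1 := Hf n Hn0.
have h2 := Hle N0 (leqnn _) n Hn0.
have [n2 [Hn2 Hn2']] : exists n2, n.+1 <= n2 /\ forall m, n2 <= m -> f m.+1 = f m.
  apply: (IH n.+1).
  - move=> m Hm; apply: Hf; lia.
  - move=> N' HN' m Hm; apply: Hle; lia.
  - lia.
exists n2; split => //; lia.
Qed.

Section Main.
Variables (g a b : nat) (gam : nat -> nat).
Hypothesis Hg : 1 <= g.
Hypothesis Ha : 0 < a.
Hypothesis Hab : a < b.
Hypothesis H1 : gam 1 = a.
Hypothesis H2 : gam 2 = b.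
Hypothesis HH : forall r, 3 <= r ->
     [/\ gam r.-1 < gam r,
         DgSeq g (gprefix gam r) &
         forall x, gam r.-1 < x -> x < gam r ->
           ~ DgSeq g (rcons (gprefix gam r.-1) x)].

Definition F n t := nreps (gprefix gam n) t.
Fixpoint M n := if n is k.+1 then M k + gam k.+1 else 0.
Definition adm n x := forall t, F n (t + x) + F n t <= g.

Lemma gprefixS n : gprefix gam n.+1 = rcons (gprefix gam n) (gam n.+1).
Proof.
rewrite /gprefix.
have -> : iota 1 n.+1 = iota 1 n ++ [:: n.+1] by rewrite -(addn1 n) iotaD addnC.
by rewrite map_cat cats1.
Qed.

Lemma size_gprefix n : size (gprefix gam n) = n.
Proof. by rewrite /gprefix size_map size_iota. Qed.

Lemma take_gprefix m n : m <= n -> take m (gprefix gam n) = gprefix gam m.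
Proof. by move=> H; rewrite /gprefix -map_take take_iota (minn_idPl H). Qed.

Lemma F0 t : F 0 t = (t == 0).
Proof. exact: nreps_nil. Qed.

Lemma FS n t : F n.+1 t = F n t + (if gam n.+1 <= t then F n (t - gam n.+1) else 0).
Proof. by rewrite /F gprefixS nreps_rcons. Qed.

Lemma Fplus n u : F n.+1 (u + gam n.+1) = F n (u + gam n.+1) + F n u.
Proof. by rewrite FS leq_addl addnK. Qed.

Lemma Fmono1 n t : F n t <= F n.+1 t.
Proof. by rewrite FS leq_addr. Qed.

Lemma Fmono m n t : m <= n -> F m t <= F n t.
Proof.
elim: n => [|n IH]; first by rewrite leqn0 => /eqP ->.
rewrite leq_eqVlt => /orP [/eqP -> //|H].
exact: leq_trans (IH H) (Fmono1 _ _).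
Qed.

Lemma Flow n u : F n u <= F n.+1 (u + gam n.+1).
Proof. by rewrite Fplus leq_addl. Qed.

Lemma Fvan n t : M n < t -> F n t = 0.
Proof.
elim: n t => [|n IH] t Ht /=; first by rewrite F0; case: t Ht.
rewrite FS IH /=; last by move: Ht => /=; lia.
case: leqP => // H; rewrite IH //; move: Ht => /=; lia.
Qed.

Lemma Fb n t : F n t <= g.
Proof.
have H3 : forall n, 3 <= n -> F n t <= g.
  move=> m Hm; case: (HH Hm) => _ HD _.
  have := HD m t; rewrite size_gprefix take_gprefix //; exact.
case: (leqP 3 n) => Hn; first exact: H3.
exact: leq_trans (Fmono _ (ltnW Hn)) (H3 _ (leqnn _)).
Qed.

Lemma DgOK n x : adm n x -> DgSeq g (rcons (gprefix gam n) x).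
Proof.
move=> Hx m t; rewrite size_rcons size_gprefix => Hm.
case: (leqP m n) => Hmn.
  by rewrite -cats1 takel_cat ?size_gprefix // take_gprefix //; apply: Fb.
rewrite take_oversize ?size_rcons ?size_gprefix //.
rewrite nreps_rcons; case: (leqP x t) => Hxt; last by rewrite addn0; apply: Fb.
by have := Hx (t - x); rewrite subnK.
Qed.

Lemma gam_step i : 1 <= i -> gam i < gam i.+1.
Proof.
case: i => // -[|i] _; first by rewrite H1 H2.
by case: (HH (isT : 3 <= i.+3)).
Qed.

Lemma gam_inc i j : 1 <= i -> i < j -> gam i < gam j.
Proof.
move=> Hi; elim: j => // j IH.
rewrite ltnS leq_eqVlt => /orP [/eqP <-|H]; first exact: gam_step.
apply: ltn_trans (IH H) (gam_step _); lia.
Qed.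

Lemma gam_le i j : 1 <= i -> i <= j -> gam i <= gam j.
Proof.
move=> Hi; rewrite leq_eqVlt => /orP [/eqP ->//|H].
exact: ltnW (gam_inc Hi H).
Qed.

Lemma nogap r x : 3 <= r -> gam r.-1 < x -> x < gam r -> ~ adm r.-1 x.
Proof. by move=> Hr H1' H2' Hx; case: (HH Hr) => _ _ /(_ x H1' H2'); apply; apply: DgOK. Qed.

Lemma adm_mono m n x : m <= n -> adm n x -> adm m x.
Proof.
move=> Hmn Hx t; apply: leq_trans (Hx t).
by apply: leq_add; apply: Fmono.
Qed.

Lemma gam_leM n : 2 <= n -> gam n.+1 <= M n + 1.
Proof.
move=> Hn; case: (leqP (gam n.+1) (M n + 1)) => // Hlt; exfalso.
apply: (nogap (r := n.+1) (x := M n + 1)) => //=.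
- case: n Hn Hlt => // n _ _ /=; lia.
- move=> t; rewrite (Fvan (n := n)) ?add0n; first exact: Fb.
  lia.
Qed.

Lemma gapB k : adm k (gam k.+2 - gam k.+1).
Proof.
move=> t.
have Hs := gam_step (isT : 1 <= k.+1).
have E : t + (gam k.+2 - gam k.+1) + gam k.+1 = t + gam k.+2 by lia.
have h1 := Flow k (t + (gam k.+2 - gam k.+1)); rewrite E in h1.
have h2 := Fmono1 k t.
have h3 := Fb k.+2 (t + gam k.+2); rewrite Fplus in h3.
lia.
Qed.

Lemma gapD N d : adm N d -> forall k, 2 <= k -> k <= N.+1 -> d < gam k ->
  d <= b \/ exists j, 3 <= j < k /\ d = gam j.
Proof.
move=> Hd; elim => // k IH Hk HkN Hdk.
case: (leqP k 1) => Hk1.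
  have E1 : k = 1 by lia.
  by left; rewrite -H2; apply: ltnW; rewrite E1 in Hdk.
case: (ltngtP d (gam k)) => Hdk'.
- case: (IH Hk1 (ltnW HkN) Hdk') => [|[j [Hj ->]]]; first by left.
  by right; exists j; split => //; lia.
- exfalso; apply: (nogap (r := k.+1) (x := d)) => //.
  apply: adm_mono Hd; lia.
- case: (ltngtP k 2) => Hk2; first lia.
  + by right; exists k; split => //; lia.
  + by left; rewrite Hdk' Hk2 H2.
Qed.

Lemma heavyE m j : 1 <= j -> j <= m -> adm m (gam j) -> forall t, 2 * F j.-1 t <= g.
Proof.
case: j => // i _ Hm Hx t /=.
have := adm_mono Hm Hx t.
have h1 := Flow i t; have h2 := Fmono1 i t.
lia.
Qed.

Lemma uses_inf d : ~ (forall n0, exists n, n0 <= n /\ gam n.+2 = gam n.+1 + d).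
Proof.
move=> Hinf.
have Hk : forall k, exists N c, 1 <= F N c /\ k <= F N (c + d).
  elim => [|k [N [c [Hc1 Hc2]]]]; first by exists 0, 0; rewrite F0.
  case: (Hinf N) => n [HNn Hn].
  exists n.+2, (c + gam n.+1); split.
    apply: leq_trans (Fmono1 _ _).
    apply: leq_trans (Flow _ _).
    exact: leq_trans Hc1 (Fmono _ HNn).
  have E : c + gam n.+1 + d = c + gam n.+2 by rewrite Hn addnA.
  rewrite E Fplus.
  have E2 : c + gam n.+2 = (c + d) + gam n.+1 by rewrite Hn; lia.
  rewrite E2.
  have h1 := Flow n (c + d).
  have h2 := Fmono c HNn; have h3 := Fmono (c + d) HNn.
  have h4 := Fmono1 n c.
  lia.
case: (Hk g.+1) => N [c [_ H]].
by have := Fb N (c + d); lia.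
Qed.

Lemma uses_fin d : exists n0, forall n, n0 <= n -> gam n.+2 != gam n.+1 + d.
Proof.
apply: NNPP => Hn; apply: (uses_inf (d := d)) => n0.
have := not_ex_all_not _ _ Hn n0.
move/not_all_ex_not => [n Hn'].
exists n; case: (leqP n0 n) => H; last by exfalso; apply: Hn'; lia.
split => //; apply/eqP; apply: negbNE; apply/negP => Hne; apply: Hn' => _; exact: Hne.
Qed.

Lemma uses_finD D : exists n0, forall d, d <= D -> forall n, n0 <= n -> gam n.+2 != gam n.+1 + d.
Proof.
elim: D => [|D [n1 IH]].
  case: (uses_fin 0) => n0 Hn0; exists n0 => d; rewrite leqn0 => /eqP ->; exact: Hn0.
case: (uses_fin D.+1) => n2 Hn2; exists (maxn n1 n2) => d.
rewrite leq_eqVlt => /orP [/eqP ->|Hd] n Hn.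
  apply: Hn2; lia.
apply: IH; lia.
Qed.

Lemma heavy : exists J t, g < 2 * F J t.
Proof.
apply: NNPP => Hn.
have Hall : forall J t, 2 * F J t <= g.
  move=> J t; rewrite leqNgt; apply/negP => H; apply: Hn; by exists J, t.
have Hadm : forall n x, adm n x by move=> n x t; have := Hall n (t + x); have := Hall n t; lia.
have Hs : forall n, 1 <= n -> gam n.+2 = gam n.+1 + 1.
  move=> n Hn1; have := gam_step (isT : 1 <= n.+1) => Hlt.
  case: (ltngtP (gam n.+1 + 1) (gam n.+2)) => // H; first last.
    lia.
  exfalso; apply: (nogap (r := n.+2) (x := gam n.+1 + 1)) => //=.
  lia.
case: (uses_fin 1) => n0 Hn0.
have := Hn0 (maxn n0 1) (leq_maxl _ _).
by rewrite Hs ?eqxx // leq_maxr.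
Qed.

Lemma dbl_bound : exists n1, 2 <= n1 /\ forall n, n1 <= n -> 2 * gam n <= gam n.+1.
Proof.
case: heavy => J [t0 Hh].
case: (uses_finD (gam (J + 3))) => n0 Hn0.
exists (J + 3 + n0); split; first lia.
move=> n Hn; case: (leqP (2 * gam n) (gam n.+1)) => // Hlt; exfalso.
case: n Hn Hlt => [|k] Hn Hlt; first lia.
set d := gam k.+2 - gam k.+1.
have Hadm := gapB k.
have Hst := gam_step (isT : 1 <= k.+1).
have Hdk : d < gam k.+1 by rewrite /d; lia.
have HdD : d <= gam (J + 3).
  case: (gapD Hadm (k := k.+1) (ltac:(lia)) (leqnn _) Hdk) => [Hb|[j [Hj Hdj]]].
    apply: leq_trans Hb _; rewrite -H2; apply: gam_le => //; lia.
  case: (leqP j J) => HjJ.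
    rewrite /d Hdj; apply: gam_le; lia.
  exfalso.
  have := heavyE (m := k) (j := j) (ltac:(lia)) (ltac:(lia)) ltac:(by rewrite -Hdj) t0.
  have := Fmono t0 (ltac:(lia) : J <= j.-1).
  lia.
have := Hn0 d HdD k (ltac:(lia)).
by rewrite /d subnKC ?eqxx // ltnW.
Qed.

Lemma main_res : exists n0, forall n, n0 <= n -> gam n = 2 * gam n.-1.
Proof.
case: dbl_bound => n1 [Hn1 Hd].
pose E n := M n + 1 - gam n.+1.
case: (ev_const (f := E) (N := n1)) => [n Hn|n2 [Hn2 HE]].
  rewrite /E /=.
  have := Hd n.+1 (ltac:(lia)); have := gam_leM (ltac:(lia) : 2 <= n).
  lia.
exists n2.+2 => -[|[|m]] Hm //=.
have := HE m (ltac:(lia)); rewrite /E /=.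
have := gam_leM (ltac:(lia) : 2 <= m); have := gam_leM (ltac:(lia) : 2 <= m.+1).
rewrite /=. lia.
Qed.
End Main.


Theorem theorem5 (g a b : nat) (gam : nat -> nat) :
  1 <= g -> 0 < a -> a < b ->
  gam 1 = a -> gam 2 = b ->
  (forall r, 3 <= r ->
     [/\ gam r.-1 < gam r,
         DgSeq g (gprefix gam r) &
         forall x, gam r.-1 < x -> x < gam r ->
           ~ DgSeq g (rcons (gprefix gam r.-1) x)]) ->
  exists n0, forall n, n0 <= n -> gam n = 2 * gam n.-1.
Proof.
move=> Hg Ha Hab H1 H2 HH.
exact: (main_res Hg Ha Hab H1 H2 HH).
Qed.
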